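(* Let $q$ be a prime power and $n,d$ integers with $1\leq d\leq n-1$. Then the design $\mathrm{PG}_d(n,q)$ is strongly additive under $\mathbb{Z}_{q^d}^{[n+1]_q}$, where $[m]_q=\frac{q^m-1}{q-1}$.
   Context: $\mathrm{PG}_d(n,q)$ is the design whose points are the points of the projective geometry $\mathrm{PG}(n,q)$ over $\mathbb{F}_q$ and whose blocks are the point sets of all $d$-dimensional projective subspaces; it has $[n+1]_q$ points and block size $[d+1]_q$. A subset of an abelian group $G$ is zero-sum if the sum of its elements is $0$. A design $(V,\mathscr B)$ with block size $k$ is strongly additive under $G$ if there is an injective map $f:V\to G$ such that, for every $k$-subset $S\subseteq V$, $S\in\mathscr B$ if and only if $f(S)$ is zero-sum. *)

(* Defs.v *)
From HB Require Import structures.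
From mathcomp Require Import all_boot all_order all_algebra all_field.
Set Implicit Arguments. Unset Strict Implicit. Unset Printing Implicit Defensive.
Import GRing.Theory.
Local Open Scope ring_scope.

Definition qnum (q m : nat) : nat := ((q ^ m - 1) %/ (q - 1))%N.

(* Points of PG(n, F): 1-dimensional subspaces of F^(n+1), each represented
   canonically by the square matrix <<A>>%MS spanning it. *)
Definition PGpoint (F : finFieldType) (n : nat) : finType :=
  {A : 'M[F]_(n.+1) | (\rank A == 1%N) && (<<A>>%MS == A)}.

(* Blocks of PG_d(n, F): the point sets of the (d+1)-dimensional linear
   subspaces W of F^(n+1), i.e. the d-dimensional projective subspaces. *)
Definition PG_blocks (F : finFieldType) (n d : nat) : {set {set PGpoint F n}} :=
  [set S : {set PGpoint F n} |
     [exists W : 'M[F]_(n.+1),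
        (\rank W == d.+1) && (S == [set p : PGpoint F n | (val p <= W)%MS])]].

Definition strongly_additive (V : finType) (B : {set {set V}}) (k : nat)
    (G : zmodType) : Prop :=
  exists f : V -> G, injective f /\
    forall S : {set V}, #|S| = k -> (S \in B <-> \sum_(x in S) f x = 0).

(* Main.v *)
Require Import Defs.
From HB Require Import structures.
From mathcomp Require Import all_boot all_order all_algebra all_field.
From mathcomp Require Import mxabelem.
From mathcomp Require Import zify.
Set Implicit Arguments. Unset Strict Implicit. Unset Printing Implicit Defensive.
Import GRing.Theory.

Definition G (q m : nat) : nat := \sum_(i < m) q ^ i.

Lemma GS q m : G q m.+1 = G q m + q ^ m.
Proof. by rewrite /G big_ord_recr. Qed.

Lemma GSl q m : G q m.+1 = 1 + q * G q m.
Proof. by rewrite /G big_ord_recl big_distrr /=; congr (_ + _); apply: eq_bigr => i _; rewrite expnS. Qed.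

Lemma GD q a b : G q (a + b) = G q a + q ^ a * G q b.
Proof.
elim: b => [|b IH]; first by rewrite /G big_ord0 addn0 muln0 addn0.
by rewrite addnS !GS IH expnD; lia.
Qed.

Lemma G_qnum q m : 1 < q -> qnum q m = G q m.
Proof.
move=> q1; rewrite /qnum.
have -> : q ^ m - 1 = (q - 1) * G q m.
  elim: m => [|m IH]; first by rewrite /G big_ord0 muln0.
  rewrite GS mulnDr -IH expnS.
  have : 0 < q ^ m by rewrite expn_gt0; lia.
  nia.
by rewrite mulKn //; lia.
Qed.

Lemma G_mod q m : 1 < q -> 0 < m -> G q m %% q = 1.
Proof.
move=> q1; case: m => // m _; rewrite GSl -modnDm modnMr addn0 modn_mod modn_small //.
Qed.

Lemma G_lt q m : 1 < q -> G q m < q ^ m.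
Proof.
move=> q1; elim: m => [|m IH]; first by rewrite /G big_ord0.
rewrite GS expnS; nia.
Qed.

Lemma G_mono q a b : 1 < q -> a <= b -> G q a <= G q b.
Proof. by move=> q1 /subnKC <-; rewrite GD leq_addr. Qed.

Section Geo.
Variables (F : finFieldType) (n : nat).
Local Notation P := (PGpoint F n).
Local Notation q := #|F|.

Lemma q_gt1 : 1 < q.
Proof.
rewrite (cardD1 (0:F)%R) (cardD1 (1:F)%R) !inE oner_eq0 /=; lia.
Qed.

Definition pts m (W : 'M[F]_(m, n.+1)) : {set P} := [set p : P | (val p <= W)%MS].

Lemma ptP (p : P) : \rank (val p) = 1%N /\ <<val p>>%MS = val p.
Proof. by case: p => A /= /andP[/eqP -> /eqP ->]. Qed.

Lemma mkpt_proof (v : 'rV[F]_n.+1) : v != 0%R ->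
  (\rank <<v>>%MS == 1%N) && (<<<<v>>%MS>>%MS == <<v>>%MS).
Proof. by move=> v0; rewrite genmxE rank_rV v0 genmx_id !eqxx. Qed.

Lemma pt_unique (v : 'rV[F]_n.+1) (p : P) : v != 0%R -> (v <= val p)%MS -> val p = <<v>>%MS.
Proof.
move=> v0 vp; have [r1 g] := ptP p.
have : (v == val p)%MS.
  by rewrite -(mxrank_leqif_eq vp) r1 rank_rV v0.
by move/eqmxP/eq_genmx => ->.
Qed.

Lemma card_pts m (W : 'M[F]_(m, n.+1)) : #|pts W| * (q - 1) = q ^ (\rank W) - 1.
Proof.
have -> : q ^ \rank W - 1 = #|rowg W :\ 0%R|.
  by rewrite -card_rowg (cardsD1 0%R (rowg W)) !inE sub0mx /= add1n subn1.
have H1 : forall v, v \in rowg W :\ 0%R -> 1 = \sum_(p | (p \in pts W) && (v <= val p)%MS) 1.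
  move=> v; rewrite !inE => /andP[v0 vW].
  rewrite sum1dep_card.
  pose pv : P := exist _ <<v>>%MS (mkpt_proof v0).
  transitivity #|[set pv]|; first by rewrite cards1.
  apply: eq_card => p; rewrite !inE.
  apply/eqP/andP => [->|[_ vp]].
    by rewrite /= !genmxE vW submx_refl.
  by apply: val_inj; rewrite /= (pt_unique v0 vp).
rewrite -[#|rowg W :\ 0%R|]sum1_card (eq_bigr _ H1).
rewrite (exchange_big_dep (fun p => p \in pts W)) /=; last by move=> v p _ /andP[].
rewrite -sum_nat_const; apply: eq_bigr => p pW.
rewrite sum1dep_card.
have [r1 _] := ptP p.
transitivity #|rowg (val p) :\ 0%R|.
  have := cardsD1 0%R (rowg (val p)); rewrite card_rowg r1 expn1 !inE sub0mx => ->.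
  by rewrite add1n subn1.
move: pW; rewrite inE => pW.
apply: eq_card => v; rewrite !inE pW /=.
case vp: (v <= val p)%MS; rewrite ?andbF ?andbT //.
by rewrite (submx_trans vp pW) andbT.
Qed.

Lemma G_mul q m : 0 < q -> (q - 1) * G q m = q ^ m - 1.
Proof.
move=> q0; elim: m => [|m IH]; first by rewrite /G big_ord0 muln0.
rewrite GS mulnDr IH expnS.
have : 0 < q ^ m by rewrite expn_gt0 q0.
nia.
Qed.

Lemma card_ptsG m (W : 'M[F]_(m, n.+1)) : #|pts W| = G q (\rank W).
Proof.
have := card_pts W; rewrite -(G_mul _ (ltnW q_gt1)) mulnC => /eqP.
by rewrite eqn_pmul2l ?subn_gt0 ?q_gt1 // => /eqP.
Qed.

Lemma kerT_sym m1 m2 (A : 'M[F]_(m1, n.+1)) (B : 'M[F]_(m2, n.+1)) :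
  (B <= kermx A^T)%MS = (A <= kermx B^T)%MS.
Proof.
rewrite !sub_kermx -(inj_eq (@trmx_inj _ _ _)) trmx_mul trmxK trmx0 //.
Qed.

Lemma perp_perp m (A : 'M[F]_(m, n.+1)) : (A == kermx (kermx A^T)^T)%MS.
Proof.
have sA : (A <= kermx (kermx A^T)^T)%MS by rewrite kerT_sym submx_refl.
rewrite -(mxrank_leqif_eq sA) !mxrank_ker !mxrank_tr mxrank_ker mxrank_tr.
have := rank_leq_col A; lia.
Qed.

Definition Hyp (z : P) : 'M[F]_n.+1 := kermx (val z)^T.

Lemma rank_Hyp z : \rank (Hyp z) = n.
Proof. by rewrite /Hyp mxrank_ker mxrank_tr (ptP z).1 subn1. Qed.

Definition orth (p z : P) : bool := (val p <= Hyp z)%MS.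

Lemma orthC p z : orth p z = orth z p.
Proof. exact: kerT_sym. Qed.

Lemma orth_inj x y : (forall z, orth x z = orth y z) -> x = y.
Proof.
move=> H.
have sH : (Hyp x <= Hyp y)%MS.
  apply/row_subP => i; set u := row i (Hyp x).
  have [->|u0] := eqVneq u 0%R; first by rewrite sub0mx.
  pose z : P := exist _ <<u>>%MS (mkpt_proof u0).
  have : orth z x by rewrite /orth /= genmxE row_sub.
  by rewrite orthC H orthC /orth /= genmxE.
have yx : (val y <= val x)%MS.
  rewrite (eqmxP (perp_perp (val x))) kerT_sym.
  by rewrite -/(Hyp x).
have : (val y == val x)%MS by rewrite -(mxrank_leqif_eq yx) !(ptP _).1.
move=> /eqmxP /eq_genmx; rewrite !(ptP _).2 => e; exact: val_inj.
Qed.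

Lemma fwd (d : nat) (W : 'M[F]_(n.+1)) z : \rank W = d.+1 ->
  q ^ d %| #|[set x in pts W | ~~ orth x z]|.
Proof.
move=> rW.
have E := cardsID (pts (Hyp z)) (pts W).
have E1 : pts W :&: pts (Hyp z) = pts (W :&: Hyp z)%MS.
  by apply/setP => x; rewrite !inE sub_capmx.
have E2 : pts W :\: pts (Hyp z) = [set x in pts W | ~~ orth x z].
  by apply/setP => x; rewrite !inE andbC.
rewrite E1 E2 !card_ptsG rW in E.
have h1 := mxrank_sum_cap W (Hyp z).
have h2 : \rank (W + Hyp z)%MS <= n.+1 := rank_leq_col _.
have h3 : \rank (W :&: Hyp z)%MS <= \rank W := mxrankS (capmxSl _ _).
rewrite rank_Hyp rW in h1; rewrite rW in h3.
have [e|e] : \rank (W :&: Hyp z)%MS = d \/ \rank (W :&: Hyp z)%MS = d.+1 by lia.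
  by rewrite e GS in E; have -> : #|[set x in pts W | ~~ orth x z]| = q ^ d by lia.
by rewrite e in E; have -> : #|[set x in pts W | ~~ orth x z]| = 0 by lia.
Qed.

Lemma count_sum (T : finType) (a b : pred T) :
  \sum_(x | a x) (b x : nat) = #|[set x | a x && b x]|.
Proof.
rewrite -sum1dep_card big_mkcondr /=; apply: eq_bigr => x _; by case: (b x).
Qed.

Lemma cardP : #|P| = G q n.+1.
Proof.
rewrite -(mxrank1 F n.+1) -card_ptsG -cardsT; apply: eq_card => x.
by rewrite !inE submx1.
Qed.

Lemma bwd d (S : {set P}) : #|S| = G q d.+1 ->
  (forall z, q ^ d %| #|[set x in S | ~~ orth x z]|) ->
  exists2 W : 'M[F]_(n.+1), \rank W = d.+1 & S = pts W.
Proof.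
move=> cS hS.
set W := (\sum_(p in S) val p)%MS.
have SW : S \subset pts W.
  by apply/subsetP => p pS; rewrite inE; exact: (sumsmx_sup p pS (submx_refl _)).
pose c z := #|[set x in S | ~~ orth x z]|.
have qd0 : 0 < q ^ d by rewrite expn_gt0 (ltnW q_gt1).
have cle : forall z, c z = 0 \/ c z = q ^ d.
  move=> z; have : c z <= #|S|.
    by apply: subset_leq_card; apply/subsetP => x; rewrite inE => /andP[].
  rewrite cS GS; have := G_lt d q_gt1; have := hS z; rewrite -/(c z).
  move=> /dvdnP [k ->]; move: qd0 (G q d) (q ^ d) => _ g Q; case: k => [|[|k]]; nia.
pose K := kermx W^T.
have c0 : forall z, (c z == 0) = (z \in pts K).
  move=> z; rewrite inE kerT_sym -/(Hyp z) cards_eq0; apply/eqP/idP.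
    move=> e; apply/sumsmx_subP => p pS; apply/negPn/negP => np.
    have : p \in set0 by rewrite -e inE pS /orth np.
    by rewrite inE.
  move=> WH; apply/setP => x; rewrite !inE; case xS: (x \in S) => //=.
  by rewrite /orth (submx_trans _ WH) // (sumsmx_sup x xS (submx_refl _)).
have sum1 : \sum_z c z = #|~: pts K| * q ^ d.
  rewrite -sum_nat_const [RHS]big_mkcond; apply: eq_bigr => z _.
  rewrite in_setC; rewrite -c0; by case: (cle z) => ->; rewrite ?eqxx //; rewrite eqn0Ngt qd0.
have sum2 : \sum_z c z = #|S| * (G q n.+1 - G q n).
  transitivity (\sum_z \sum_(x in S) (~~ orth x z : nat)).
    by apply: eq_bigr => z _; rewrite count_sum.
  rewrite exchange_big /= -sum_nat_const; apply: eq_bigr => x _.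
  rewrite (count_sum xpredT) -cardP.
  have -> : G q n = #|pts (Hyp x)| by rewrite card_ptsG rank_Hyp.
  rewrite -(cardsC (pts (Hyp x))) addKn; apply: eq_card => z; rewrite !inE orthC.
  by [].
have eq0 := cardsC (pts K).
rewrite cardP card_ptsG /K mxrank_ker mxrank_tr in eq0.
set r := \rank W in eq0.
have rle : r <= n.+1 := rank_leq_col _.
have Er : G q n.+1 = G q (n.+1 - r) + q ^ (n.+1 - r) * G q r.
  by rewrite -GD subnK.
have Eq : q ^ (n.+1 - r) * G q r * q ^ d = G q d.+1 * q ^ n.
  rewrite -cS -[q ^ n](addKn (G q n)) -GS -sum2 sum1 -mulnA.
  have -> : #|~: pts K| = q ^ (n.+1 - r) * G q r by move: eq0; rewrite -/K; lia.
  by rewrite mulnA.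
have rge : d.+1 <= r.
  rewrite leqNgt; apply/negP => rlt.
  have : G q r <= G q d by apply: G_mono q_gt1 _; rewrite -ltnS.
  have : G q d.+1 <= G q r by rewrite -cS /r -card_ptsG; exact: subset_leq_card.
  rewrite GS; lia.
have rdd : r = d.+1.
  apply/eqP; rewrite eqn_leq rge andbT leqNgt; apply/negP => rgt.
  set a := n.+1 - r in Eq; set t := r - d.+1.
  have nE : n = a + d + t by rewrite /a /t; lia.
  have t0 : 0 < t by rewrite /t; lia.
  rewrite nE !expnD in Eq.
  have E2 : q ^ a * q ^ d * G q r = q ^ a * q ^ d * (G q d.+1 * q ^ t).
    by rewrite [LHS]mulnAC Eq mulnCA.
  have X0 : 0 < q ^ a * q ^ d by rewrite muln_gt0 qd0 expn_gt0 (ltnW q_gt1).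
  move/eqP: E2; rewrite eqn_pmul2l // => /eqP E2.
  have := G_mod q_gt1 (ltn_trans (ltn0Sn d) rgt).
  rewrite E2 -(subnK t0) expnD expn1 mulnA modnMl //.
exists W; first by [].
apply/setP; apply/subset_cardP => //.
by rewrite card_ptsG -/r rdd cS.
Qed.
End Geo.

Lemma natZp m c : 1 < m -> ((c%:R)%R : 'Z_m) == 0%R = (m %| c).
Proof. move=> m1; rewrite -val_eqE /= Zp_nat /= Zp_cast //. Qed.
Lemma boolZp m (b1 b2 : bool) : 1 < m -> (((b1:nat)%:R)%R == ((b2:nat)%:R)%R :> 'Z_m) = (b1 == b2).
Proof. move=> m1; case: b1; case: b2 => //=; rewrite ?eqxx //. all: try rewrite eq_sym. all: rewrite natZp // dvdn1; by case: m m1 => [|[]]. Qed.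


Lemma row0 m N (c : 'I_N -> nat) : 1 < m ->
  (\row_(j < N) ((c j)%:R)%R = 0 :> 'rV['Z_m]_N)%R <-> forall j, m %| c j.
Proof.
move=> m1; split.
  by move/matrixP => H j; have := H ord0 j; rewrite !mxE => /eqP; rewrite natZp.
by move=> H; apply/matrixP => i j; rewrite !mxE; apply/eqP; rewrite natZp.
Qed.

Theorem theorem4p1 (F : finFieldType) (n d : nat) :
  (1 <= d)%N -> (d <= n - 1)%N ->
  strongly_additive (PG_blocks F n d) (qnum #|F| d.+1)
    'rV['Z_(#|F| ^ d)]_(qnum #|F| n.+1).
Proof.
move=> d1 dn.
have q1 := q_gt1 F.
have cP : #|PGpoint F n| = qnum #|F| n.+1 by rewrite G_qnum // cardP.
have m1 : 1 < #|F| ^ d.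
  apply: (leq_trans q1); rewrite -{1}(expn1 #|F|) leq_pexp2l //; lia.
pose e (j : 'I_(qnum #|F| n.+1)) : PGpoint F n := enum_val (cast_ord (esym cP) j).
have surj : forall z, e (cast_ord cP (enum_rank z)) = z.
  by move=> z; rewrite /e cast_ordK enum_rankK.
pose f (x : PGpoint F n) : 'rV['Z_(#|F| ^ d)]_(qnum #|F| n.+1) :=
  (\row_j ((~~ orth x (e j) : nat)%:R))%R.
exists f; split.
  move=> x y /matrixP H; apply: orth_inj => z.
  have := H 0%R (cast_ord cP (enum_rank z)); rewrite !mxE surj => /eqP.
  by rewrite boolZp // => /eqP; case: (orth x z); case: (orth y z).
move=> S cS.
have sumE : (\sum_(x in S) f x)%R =
   (\row_j (#|[set x in S | ~~ orth x (e j)]|%:R))%R.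
  apply/matrixP => i j; rewrite summxE !mxE.
  rewrite (eq_bigr (fun x => (((~~ orth x (e j) : nat)%:R)%R : 'Z_(#|F| ^ d)))); last first.
    by move=> x _; rewrite mxE.
  by rewrite -natr_sum count_sum.
rewrite sumE row0 //; split.
  rewrite inE => /existsP [W /andP [/eqP rW /eqP ->]] j.
  exact: fwd.
move=> H.
have [W rW SW] : exists2 W : 'M[F]_(n.+1), \rank W = d.+1 & S = pts W.
  apply: bwd; first by rewrite cS G_qnum.
  by move=> z; have := H (cast_ord cP (enum_rank z)); rewrite surj.
rewrite inE; apply/existsP; exists W; by rewrite rW SW !eqxx.
Qed.
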